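(* Let $k$ be a positive integer, $S=\{3k,3k+1,6k-1\}$ and $G=\langle S\rangle$. For $i\in\mathbb{N}$ let $A_{i,k}=[(2i)3k-i,\,(2i)3k+2i]$ and $B_{i,k}=[(2i+1)3k-i,\,(2i+1)3k+2i+1]$, and let $H_{1,k}=\bigcup_{i\in\mathbb{N}}(A_{i,k}\cup B_{i,k})$. Then: (1) $H_{1,k}$ is a submonoid of $(\mathbb{N},+,0)$ containing $S$; (2) $A_{i,k}<B_{i,k}$ for every $i\in[0,k-1]$; (3) $B_{i,k}<A_{i+1,k}$ for every $i\in[0,k-1]$; (4) $[(2(k-1)+1)3k-(k-1),\infty[\ \subseteq H_{1,k}$; (5) $G=H_{1,k}$; (6) $H_{1,k}$ is a $3$-permutation numerical semigroup.
   Context: $\mathbb{N}=\{0,1,2,\dots\}$. A numerical semigroup is a submonoid $G$ of $(\mathbb{N},+,0)$ with $\mathbb{N}\setminus G$ finite; $\langle S\rangle$ is the submonoid generated by $S$. Writing the elements of a numerical semigroup $G$ as $0=g_0<g_1<g_2<\cdots$, $G$ is an $n$-permutation numerical semigroup if $G=\langle\{g_1,\dots,g_n\}\rangle$ and for every $k\in\mathbb{N}$ the tuple $(g_{kn+1}\bmod n,\dots,g_{kn+n}\bmod n)$ contains exactly one representative of each residue class mod $n$. Notation: $[a,b]=\{x\in\mathbb{N}:a\le x\le b\}$, $[a,\infty[=\{x\in\mathbb{N}:x\ge a\}$. For nonempty $A,B\subseteq\mathbb{N}$, $A<B$ means $x<y$ for all $x\in A$, $y\in B$. *)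

(* Defs.v *)
From mathcomp Require Import all_boot.
Set Implicit Arguments. Unset Strict Implicit. Unset Printing Implicit Defensive.

Definition in_itv (a b x : nat) : Prop := a <= x <= b.

Definition set_lt (A B : nat -> Prop) : Prop :=
  forall x y, A x -> B y -> x < y.

Definition submonoid (G : nat -> Prop) : Prop :=
  G 0 /\ forall x y, G x -> G y -> G (x + y).

Inductive gen (S : nat -> Prop) : nat -> Prop :=
  | gen0 : gen S 0
  | genS x : S x -> gen S x
  | genD x y : gen S x -> gen S y -> gen S (x + y).

Definition numerical_semigroup (G : nat -> Prop) : Prop :=
  submonoid G /\ exists N, forall x, N <= x -> G x.

(* enum_at G j x : x is g_j, the j-th element (0-based: g_0 < g_1 < ...)
   of G in increasing order, i.e. x \in G and exactly j elements of G lie below x. *)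
Definition enum_at (G : nat -> Prop) (j x : nat) : Prop :=
  G x /\ exists s : seq nat, [/\ size s = j, uniq s &
                                  forall y, y \in s <-> (G y /\ y < x)].

Definition perm_numerical_semigroup (n : nat) (G : nat -> Prop) : Prop :=
  numerical_semigroup G /\
  (forall x, G x <-> gen (fun y => exists t, 1 <= t <= n /\ enum_at G t y) x) /\
  (forall m r, r < n ->
     exists! t, 1 <= t <= n /\ exists x, enum_at G (m * n + t) x /\ x %% n = r).

Definition A_ik (i k : nat) : nat -> Prop :=
  in_itv ((2 * i) * (3 * k) - i) ((2 * i) * (3 * k) + 2 * i).
Definition B_ik (i k : nat) : nat -> Prop :=
  in_itv ((2 * i + 1) * (3 * k) - i) ((2 * i + 1) * (3 * k) + 2 * i + 1).
Definition H1 (k : nat) : nat -> Prop :=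
  fun x => exists i, A_ik i k x \/ B_ik i k x.

Definition S_k (k : nat) : nat -> Prop :=
  fun x => x = 3 * k \/ x = 3 * k + 1 \/ x = 6 * k - 1.

(* Main.v *)
Require Import Defs.
From mathcomp Require Import all_boot zify.

Definition inA (k i x : nat) : bool := (2 * i) * (3 * k) - i <= x <= (2 * i) * (3 * k) + 2 * i.
Definition inB (k i x : nat) : bool := (2 * i + 1) * (3 * k) - i <= x <= (2 * i + 1) * (3 * k) + 2 * i + 1.
Definition hb (k x : nat) : bool := has (fun i => inA k i x || inB k i x) (iota 0 x.+1).
Definition C (k x : nat) : nat := count (hb k) (iota 0 x).

Lemma hbP k x : 0 < k -> H1 k x <-> hb k x.
Proof.
move=> hk; split.
  move=> [i Hi]; have Hb : inA k i x || inB k i x by case: Hi => H; apply/orP; [left|right].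
  apply/hasP; exists i => //.
  rewrite mem_iota /=. case: Hi; rewrite /A_ik /B_ik /in_itv => /andP[h1 h2]; nia.
move/hasP=> [i _ /orP Hi]; exists i; exact Hi.
Qed.

Lemma C_add k a n : C k (a + n) = C k a + count (hb k) (iota a n).
Proof. by rewrite /C iotaD count_cat. Qed.

Lemma C_S k x : C k x.+1 = C k x + hb k x.
Proof. by rewrite -addn1 C_add /= addn0. Qed.

Lemma C_mono k a b : a <= b -> C k a <= C k b.
Proof. move=> h; rewrite -(subnKC h) C_add; exact: leq_addr. Qed.

Lemma C_uniq k x y : hb k x -> hb k y -> C k x = C k y -> x = y.
Proof.
move=> hx hy e; case: (ltngtP x y) => // h.
  have := @C_mono k x.+1 y h; rewrite C_S hx e; lia.
have := @C_mono k y.+1 x h; rewrite C_S hy e; lia.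
Qed.

Lemma C_next k x y : x < y -> hb k x -> (forall z, x < z < y -> ~~ hb k z) ->
  C k y = (C k x).+1.
Proof.
move=> hxy hx hz.
have -> : y = x.+1 + (y - x.+1) by lia.
rewrite C_add C_S hx.
rewrite (@eq_in_count _ _ pred0); first by rewrite count_pred0; lia.
move=> z; rewrite mem_iota => hz'; apply/negbTE/hz; lia.
Qed.

Lemma Lmem k i d : 0 < k -> i < k -> d < 6 * k - 1 ->
  hb k ((2 * i) * (3 * k) - i + d) = (d <= 3 * i) || (3 * k <= d <= 3 * k + 3 * i + 1).
Proof.
move=> hk hi hd; apply/idP/idP.
  move/(hbP _ _ hk) => [j [H|H]]; move: H; rewrite /A_ik /B_ik /in_itv => /andP[h1 h2];
  apply/orP; case: (ltngtP j i) => hj.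
  all: try (exfalso; (have [e ?] : exists e, i = j + 1 + e by exists (i - j - 1); lia); subst i; nia).
  all: try (exfalso; (have [e ?] : exists e, j = i + 1 + e by exists (j - i - 1); lia); subst j; nia).
  left; nia. right; nia.
move/orP=> H; apply/(hbP _ _ hk); exists i; case: H => H; [left|right];
  rewrite /A_ik /B_ik /in_itv; nia.
Qed.

Lemma Lpre k i d : 0 < k -> i < k -> d <= 6 * k - 1 ->
  count (hb k) (iota ((2 * i) * (3 * k) - i) d) = minn d (3 * i + 1) + minn (d - 3 * k) (3 * i + 2).
Proof.
move=> hk hi; elim: d => [|d IH] hd; first by rewrite /=; lia.
rewrite -(addn1 d) iotaD count_cat IH; last lia.
rewrite /= Lmem //.
case: (leqP d (3 * i)) => h1 /=.
  have -> : d - 3 * k = 0 by lia.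
  have -> : d + 1 - 3 * k = 0 by lia.
  lia.
case: (leqP (3 * k) d) => h2 /=; case: (leqP d (3 * k + 3 * i + 1)) => h3 /=; lia.
Qed.

Lemma Lblock k i : 0 < k -> i <= k -> C k ((2 * i) * (3 * k) - i) = 3 * (i * i).
Proof.
move=> hk; elim: i => [|i IH] hi; first by [].
have -> : 2 * i.+1 * (3 * k) - i.+1 = (2 * i) * (3 * k) - i + (6 * k - 1) by nia.
rewrite C_add IH; last lia.
rewrite Lpre //; lia.
Qed.

Lemma LC k i d : 0 < k -> i < k -> d <= 6 * k - 1 ->
  C k ((2 * i) * (3 * k) - i + d) = 3 * (i * i) + minn d (3 * i + 1) + minn (d - 3 * k) (3 * i + 2).
Proof.
move=> hk hi hd; rewrite C_add Lblock //; last lia. rewrite Lpre //; lia.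
Qed.

Lemma Hsub k : submonoid (H1 k).
Proof.
split; first by exists 0; left; rewrite /A_ik /in_itv.
move=> x y [i Hi] [j Hj]; rewrite /A_ik /B_ik /in_itv in Hi Hj.
case: Hi => /andP[h1 h2]; case: Hj => /andP[h3 h4].
- exists (i + j); left; rewrite /A_ik /in_itv; apply/andP; split; nia.
- exists (i + j); right; rewrite /B_ik /in_itv; apply/andP; split; nia.
- exists (i + j); right; rewrite /B_ik /in_itv; apply/andP; split; nia.
- exists (i + j).+1; left; rewrite /A_ik /in_itv; apply/andP; split; nia.
Qed.

Lemma Hcond k x : 0 < k -> (2 * (k - 1) + 1) * (3 * k) - (k - 1) <= x -> H1 k x.
Proof.
move=> hk hx.
have hk6 : 0 < 6 * k by lia.
have := divn_eq x (6 * k); have := ltn_pmod x hk6.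
move: (x %/ (6 * k)) (x %% (6 * k)) => q r hr hxe.
have [e ?] : exists e, k = e.+1 by exists k.-1; lia.
subst k.
case: (leqP r (2 * q)) => h1.
  exists q; left; rewrite /A_ik /in_itv; apply/andP; split; nia.
case: (leqP (6 * e.+1 - q.+1) r) => h2.
  exists q.+1; left; rewrite /A_ik /in_itv; apply/andP; split; nia.
exists q; right; rewrite /B_ik /in_itv.
case: (ltnP q e) => h3.
  exfalso. have h4 : x < 6 * e.+1 * q.+1 by nia.
  have h5 : 6 * e.+1 * q.+1 <= 6 * e.+1 * e by apply: leq_mul; lia.
  nia.
have hx2 : 6 * e.+1 * q + r = x by lia.
case: (ltngtP q e) => h6; first lia.
  have [f ?] : exists f, q = e + 1 + f by exists (q - e - 1); lia.
  subst q; apply/andP; split; nia.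
subst q; apply/andP; split; nia.
Qed.

Lemma gen_eq S x y : x = y -> gen S x -> gen S y.
Proof. by move=> ->. Qed.

Lemma genA k i d : 0 < k -> d <= 3 * i -> gen (S_k k) ((2 * i) * (3 * k) - i + d).
Proof.
move=> hk; elim: i d => [|i IH] d hd.
  have -> : d = 0 by lia. exact: gen0.
have g1 : gen (S_k k) (3 * k) by apply: genS; left.
have g2 : gen (S_k k) (3 * k + 1) by apply: genS; right; left.
have g3 : gen (S_k k) (6 * k - 1) by apply: genS; right; right.
case: (leqP d 3) => hd3.
  have gi := IH 0 (leq0n _).
  case: d hd hd3 => [|[|[|[|d]]]] hd hd3 //.
  - apply: gen_eq (genD g3 gi); nia.
  - apply: gen_eq (genD (genD g1 g1) gi); nia.
  - apply: gen_eq (genD (genD g1 g2) gi); nia.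
  - apply: gen_eq (genD (genD g2 g2) gi); nia.
have gi := IH (d - 3) ltac:(lia).
apply: gen_eq (genD (genD g2 g2) gi); nia.
Qed.

Lemma genH k x : 0 < k -> H1 k x -> gen (S_k k) x.
Proof.
move=> hk [i [H|H]]; rewrite /A_ik /B_ik /in_itv in H; case/andP: H => h1 h2.
  apply: gen_eq (genA k i (x - ((2 * i) * (3 * k) - i)) hk _); lia.
have g1 : gen (S_k k) (3 * k) by apply: genS; left.
have g2 : gen (S_k k) (3 * k + 1) by apply: genS; right; left.
case: (leqP (x - ((2 * i + 1) * (3 * k) - i)) (3 * i)) => h3.
  apply: gen_eq (genD g1 (genA k i (x - ((2 * i + 1) * (3 * k) - i)) hk h3)); nia.
apply: gen_eq (genD g2 (genA k i (3 * i) hk (leqnn _))); nia.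
Qed.

Lemma SinH k x : S_k k x -> H1 k x.
Proof.
rewrite /S_k => [[->|[->|->]]].
- by exists 0; right; rewrite /B_ik /in_itv; apply/andP; split; lia.
- by exists 0; right; rewrite /B_ik /in_itv; apply/andP; split; lia.
- by exists 1; left; rewrite /A_ik /in_itv; apply/andP; split; lia.
Qed.

Lemma Hgen k x : 0 < k -> gen (S_k k) x <-> H1 k x.
Proof.
move=> hk; split; last exact: genH.
elim=> [|y /SinH //|y z _ hy _ hz]; first exact: (Hsub k).1.
exact: (Hsub k).2.
Qed.

Lemma enum_iff k j x : 0 < k -> enum_at (H1 k) j x <-> hb k x /\ C k x = j.
Proof.
move=> hk; split.
  move=> [hx [s [hs hu hm]]]; split; first exact/hbP.
  rewrite -hs /C -size_filter; apply/perm_size/uniq_perm.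
  - exact/filter_uniq/iota_uniq.
  - exact: hu.
  move=> y; rewrite mem_filter mem_iota /=.
  apply/idP/idP.
    move=> /andP[h1 h2]; apply/(hm y); split; [exact/hbP|lia].
  by move/(hm y) => [/(hbP _ _ hk) -> h]; rewrite h.
move=> [hx hC]; split; first exact/hbP.
exists (filter (hb k) (iota 0 x)); split.
- by rewrite size_filter.
- exact/filter_uniq/iota_uniq.
move=> y; rewrite mem_filter mem_iota /=; split.
  by move=> /andP[h1 h2]; split; [exact/hbP|lia].
by move=> [/(hbP _ _ hk) -> h]; rewrite h.
Qed.

Lemma exists_at k j : 0 < k -> exists x, hb k x /\ C k x = j.
Proof.
move=> hk.
set N := (2 * (k - 1) + 1) * (3 * k) - (k - 1).
have hall : forall n, C k (N + n) = C k N + n.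
  elim=> [|n IH]; first by rewrite !addn0.
  have hn : hb k (N + n) by apply/(hbP _ _ hk); apply: Hcond => //; rewrite /N; lia.
  by rewrite addnS C_S IH hn addnS addn1.
have ex : exists x, j < C k x.+1 by exists (N + j); rewrite -addnS hall; lia.
case: (ex_minnP ex) => x hx hmin.
have hle : C k x <= j.
  case: x hx hmin => [|x] hx hmin; first by rewrite /C.
  case: (leqP (C k x.+1) j) => // h; have := hmin x h; lia.
move: hx; rewrite C_S; case hb0: (hb k x) => /= hx; last lia.
exists x; split => //; lia.
Qed.

Lemma C_at k i d y : 0 < k -> i < k -> d <= 6 * k - 1 -> y = (2 * i) * (3 * k) - i + d ->
  C k y = 3 * (i * i) + minn d (3 * i + 1) + minn (d - 3 * k) (3 * i + 2).
Proof. by move=> hk hi hd ->; apply: LC. Qed.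

Lemma key k x y j : 0 < k -> hb k x -> C k x = j -> j %% 3 != 0 ->
  hb k y -> C k y = j.+1 -> y %% 3 = x.+1 %% 3.
Proof.
move=> hk hx Cx hj hy Cy.
case hx1: (hb k x.+1).
  have : C k x.+1 = j.+1 by rewrite C_S hx Cx addn1.
  by rewrite -Cy => /(@C_uniq k _ _ hx1 hy) ->.
have nH : ~ H1 k x.+1 by move/(hbP _ _ hk); rewrite hx1.
move/(hbP _ _ hk): hx => [i [H|H]]; rewrite /A_ik /B_ik /in_itv in H; case/andP: H => h1 h2.
  case: (leqP ((2 * i) * (3 * k) + 2 * i) x) => h3; last first.
    by exfalso; apply: nH; exists i; left; rewrite /A_ik /in_itv; apply/andP; split; lia.
  case: (leqP k i) => h4.
    by exfalso; apply: nH; exists i; right; rewrite /B_ik /in_itv; apply/andP; split; nia.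
  have := C_at k i (3 * i) x hk h4 ltac:(lia) ltac:(nia).
  move=> e; exfalso; move: hj; rewrite -Cx e.
  have -> : minn (3 * i) (3 * i + 1) = 3 * i by lia.
  have -> : 3 * i - 3 * k = 0 by lia.
  rewrite min0n addn0 -mulnDr; rewrite modnMr //.
case: (leqP ((2 * i + 1) * (3 * k) + 2 * i + 1) x) => h3; last first.
  by exfalso; apply: nH; exists i; right; rewrite /B_ik /in_itv; apply/andP; split; lia.
case: (leqP k i.+1) => h4.
  by exfalso; apply: nH; exists i.+1; left; rewrite /A_ik /in_itv; apply/andP; split; nia.
set z := (2 * i.+1) * (3 * k) - i.+1.
have hz : hb k z.
  by apply/(hbP _ _ hk); exists i.+1; left; rewrite /A_ik /in_itv /z; apply/andP; split; lia.
have Cz : C k z = j.+1.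
  rewrite -Cx; apply: C_next.
  - rewrite /z; nia.
  - by apply/(hbP _ _ hk); exists i; right; rewrite /B_ik /in_itv; apply/andP; split.
  move=> w /andP[w1 w2]; have hik : i < k by lia.
  have -> : w = (2 * i) * (3 * k) - i + (w - ((2 * i) * (3 * k) - i)) by rewrite /z in w2; nia.
  rewrite Lmem //; last by rewrite /z in w2; nia.
  apply/negP => /orP[w3|/andP[w3 w4]]; rewrite /z in w2; nia.
have -> : y = z by apply: (@C_uniq k _ _ hy hz); rewrite Cy Cz.
have -> : z = x.+1 + 3 * (k - i.+1) by rewrite /z; nia.
by rewrite -modnDmr modnMr addn0.
Qed.

Lemma gen_ext (S T : nat -> Prop) x : (forall y, S y -> T y) -> gen S x -> gen T x.
Proof.
move=> hST; elim=> [|y /hST hy|y z _ hy _ hz]; [exact: gen0|exact: genS|exact: genD].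
Qed.

Lemma gens k : 0 < k -> forall y,
  S_k k y <-> (exists t, 1 <= t <= 3 /\ enum_at (H1 k) t y).
Proof.
move=> hk.
have h1 : hb k (3 * k) by apply/(hbP _ _ hk)/SinH; left.
have h2 : hb k (3 * k + 1) by apply/(hbP _ _ hk)/SinH; right; left.
have h3 : hb k (6 * k - 1) by apply/(hbP _ _ hk)/SinH; right; right.
have c1 : C k (3 * k) = 1.
  rewrite (@C_at k 0 (3 * k)) //; try lia.
have c2 : C k (3 * k + 1) = 2.
  rewrite (@C_at k 0 (3 * k + 1)) //; try lia.
have c3 : C k (6 * k - 1) = 3.
  have := Lblock k 1 hk hk; rewrite (_ : 2 * 1 * (3 * k) - 1 = 6 * k - 1) //; lia.
move=> y; split.
  case=> [->|[->|->]]; [exists 1|exists 2|exists 3]; split => //; exact/enum_iff.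
move=> [t [ht /(enum_iff _ _ _ hk) [hy cy]]].
have : t = 1 \/ t = 2 \/ t = 3 by lia.
case=> [e|[e|e]]; rewrite e in cy.
- by left; apply: (@C_uniq k _ _ hy h1); rewrite cy c1.
- by right; left; apply: (@C_uniq k _ _ hy h2); rewrite cy c2.
- by right; right; apply: (@C_uniq k _ _ hy h3); rewrite cy c3.
Qed.

Lemma resid k m r : 0 < k -> r < 3 ->
  exists! t, 1 <= t <= 3 /\ exists x, enum_at (H1 k) (m * 3 + t) x /\ x %% 3 = r.
Proof.
move=> hk hr.
have [x1 [hx1 cx1]] := @exists_at k (m * 3 + 1) hk.
have [x2 [hx2 cx2]] := @exists_at k (m * 3 + 2) hk.
have [x3 [hx3 cx3]] := @exists_at k (m * 3 + 3) hk.
have e12 : x2 %% 3 = x1.+1 %% 3.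
  apply: (@key k x1 x2 (m * 3 + 1) hk hx1 cx1 _ hx2); [lia | rewrite cx2; lia].
have e23 : x3 %% 3 = x2.+1 %% 3.
  apply: (@key k x2 x3 (m * 3 + 2) hk hx2 cx2 _ hx3); [lia | rewrite cx3; lia].
have U : forall t x, 1 <= t <= 3 -> enum_at (H1 k) (m * 3 + t) x -> x %% 3 = r ->
   (t = 1 /\ x1 %% 3 = r) \/ (t = 2 /\ x2 %% 3 = r) \/ (t = 3 /\ x3 %% 3 = r).
  move=> t x ht /(enum_iff _ _ _ hk) [hx cx] hxr.
  have : t = 1 \/ t = 2 \/ t = 3 by lia.
  case=> [e|[e|e]]; rewrite e in cx.
  - left; split => //; rewrite -hxr; congr (_ %% 3); apply: (@C_uniq k _ _ hx1 hx); lia.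
  - right; left; split => //; rewrite -hxr; congr (_ %% 3); apply: (@C_uniq k _ _ hx2 hx); lia.
  - right; right; split => //; rewrite -hxr; congr (_ %% 3); apply: (@C_uniq k _ _ hx3 hx); lia.
have : x1 %% 3 = r \/ x2 %% 3 = r \/ x3 %% 3 = r by lia.
case=> [h|[h|h]].
- exists 1; split.
    by split => //; exists x1; split => //; apply/enum_iff.
  move=> t' [ht' [x' [hx' hr']]]; have := U t' x' ht' hx' hr'; lia.
- exists 2; split.
    by split => //; exists x2; split => //; apply/enum_iff.
  move=> t' [ht' [x' [hx' hr']]]; have := U t' x' ht' hx' hr'; lia.
- exists 3; split.
    by split => //; exists x3; split => //; apply/enum_iff.
  move=> t' [ht' [x' [hx' hr']]]; have := U t' x' ht' hx' hr'; lia.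
Qed.

Theorem lemma4p1 (k : nat) (hk : 0 < k) :
  (submonoid (H1 k) /\ (forall x, S_k k x -> H1 k x)) /\
  (forall i, i <= k - 1 -> set_lt (A_ik i k) (B_ik i k)) /\
  (forall i, i <= k - 1 -> set_lt (B_ik i k) (A_ik i.+1 k)) /\
  (forall x, (2 * (k - 1) + 1) * (3 * k) - (k - 1) <= x -> H1 k x) /\
  (forall x, gen (S_k k) x <-> H1 k x) /\
  perm_numerical_semigroup 3 (H1 k).
Proof.
split; first by split; [exact: Hsub | exact: SinH].
split.
  move=> i hi x y; rewrite /A_ik /B_ik /in_itv => /andP[h1 h2] /andP[h3 h4]; nia.
split.
  move=> i hi x y; rewrite /A_ik /B_ik /in_itv => /andP[h1 h2] /andP[h3 h4]; nia.
split; first by move=> x; apply: Hcond.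
split; first by move=> x; apply: Hgen.
split.
  split; first exact: Hsub.
  by exists ((2 * (k - 1) + 1) * (3 * k) - (k - 1)) => x; apply: Hcond.
split; last by move=> m r hr; apply: resid.
move=> x; rewrite -Hgen //; split; apply: gen_ext => y; apply (@gens k hk).
Qed.
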